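(* Let $n\ge1$ and let $J\in\mathbb{R}^{2n\times 2n}$ be partitioned as $J=\begin{bmatrix}A & B\\ C & D\end{bmatrix}$ with $A,B,C,D\in\mathbb{R}^{n\times n}$. Assume (Assumption 1) that $J$ is nonsingular and $A$ is positive definite (i.e., $x^TAx>0$ for all $x\ne0$). Write $J^{-1}=\begin{bmatrix} S^\theta_p & S^\theta_q\\ S^v_p & S^v_q\end{bmatrix}$ with $n\times n$ blocks and $\tilde S=[S^v_p\ \ S^v_q]\in\mathbb{R}^{n\times 2n}$. Let $\alpha\in(0,1)^n$ and $K=\operatorname{diag}(k_1,\dots,k_n)$ with $k_i=\pm\frac{1}{\alpha_i}\sqrt{1-\alpha_i^2}$ (fixed signs), let $k_{\max}=\max_i k_i$, $k_{\min}=\min_i k_i$, $\Delta k=k_{\max}-k_{\min}$, and let $M=k_{\max}A-C$, assumed invertible. Suppose (Assumption 2) $$\Delta k < \|M^{-1}\|_2^{-1}\,\|A\|_2^{-1}$$ (which implies $\|M^{-1}\|_2\,\Delta k\,\|A\|_2<1$). Then $S_\dagger := S^v_p + S^v_q K$ is invertible; consequently, for every $\Delta v\in\mathbb{R}^n$ there exists a unique $\Delta p\in\mathbb{R}^n$ such that, with $\Delta q = K\Delta p$ and $\Delta x=[\Delta p^T,\Delta q^T]^T\in\mathbb{R}^{2n}$, one has $\Delta v=\tilde S\,\Delta x$ (i.e., $\Delta x$ is the unique solution of $\Delta v=\tilde S\Delta x$ within the subspace $\{[\Delta p^T,(K\Delta p)^T]^T:\Delta p\in\mathbb{R}^n\}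$).
   Context: $J$ is the Newton–Raphson power flow Jacobian relating $[\Delta p;\Delta q]=J[\Delta\theta;\Delta v]$, with blocks $A=\partial p/\partial\theta$, $B=\partial p/\partial v$, $C=\partial q/\partial\theta$, $D=\partial q/\partial v$; $\Delta p,\Delta q,\Delta\theta,\Delta v\in\mathbb{R}^n$ are perturbations of active power, reactive power, voltage angle and voltage magnitude at the $n$ PQ buses. $\alpha_i$ are the bus power factors $p_i/\sqrt{p_i^2+q_i^2}$. $\|\cdot\|_2$ is the spectral norm (largest singular value). *)

(* Defs.v *)
From HB Require Import structures.
From mathcomp Require Import all_boot all_order all_algebra.
From mathcomp Require Import all_classical all_reals.
Set Implicit Arguments. Unset Strict Implicit. Unset Printing Implicit Defensive.
Import Order.TTheory GRing.Theory Num.Theory.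
Local Open Scope ring_scope.
Local Open Scope classical_set_scope.

Definition vnorm (R : realType) (n : nat) (x : 'cV[R]_n) : R :=
  Num.sqrt (\sum_(i < n) x i 0 ^+ 2).

Definition specnorm (R : realType) (m n : nat) (A : 'M[R]_(m, n)) : R :=
  sup [set vnorm (A *m x) | x in [set x : 'cV[R]_n | vnorm x = 1]].

Definition posdef (R : realType) (n : nat) (A : 'M[R]_n) : Prop :=
  forall x : 'cV[R]_n, x != 0 -> 0 < (x^T *m A *m x) 0 0.

(* Main.v *)
Require Import Defs.
From HB Require Import structures.
From mathcomp Require Import all_boot all_order all_algebra.
From mathcomp Require Import all_classical all_reals.
Import Order.TTheory GRing.Theory Num.Theory.
Local Open Scope ring_scope.
From mathcomp Require Import ring lra.

Set Implicit Arguments. Unset Strict Implicit.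
Section H.
Variable R : realType.

Lemma vnorm_ge0 n (x : 'cV[R]_n) : 0 <= vnorm x.
Proof. exact: sqrtr_ge0. Qed.

Lemma vnorm_gt0 n (x : 'cV[R]_n) : x != 0 -> 0 < vnorm x.
Proof.
move=> x0; rewrite /vnorm sqrtr_gt0 lt_def sumr_ge0 ?andbT; last by move=> i _; exact: sqr_ge0.
apply: contra x0 => /eqP /psumr_eq0P H; apply/eqP/matrixP => i j.
rewrite (ord1 j) mxE; apply/eqP; rewrite -sqrf_eq0; apply/eqP/H => // ? _; exact: sqr_ge0.
Qed.

Lemma vnormZ n c (x : 'cV[R]_n) : vnorm (c *: x) = `|c| * vnorm x.
Proof.
rewrite /vnorm (eq_bigr (fun i => c ^+ 2 * x i 0 ^+ 2)); last by move=> i _; rewrite mxE exprMn.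
by rewrite -mulr_sumr sqrtrM ?sqr_ge0 // sqrtr_sqr.
Qed.

Lemma vnorm1_coord n (x : 'cV[R]_n) j : vnorm x = 1 -> `|x j 0| <= 1.
Proof.
move=> h.
have s1 : \sum_(i < n) x i 0 ^+ 2 = 1.
  by rewrite -[RHS](expr1n _ 2) -h /vnorm sqr_sqrtr // sumr_ge0 // => i _; exact: sqr_ge0.
have : x j 0 ^+ 2 <= 1.
  rewrite -s1 (bigD1 j) //= lerDl sumr_ge0 // => i _; exact: sqr_ge0.
by rewrite -real_normK ?num_real // expr_le1.
Qed.

Lemma specnorm_bnd m n (A : 'M[R]_(m, n)) :
  has_ubound [set vnorm (A *m x) | x in [set x : 'cV[R]_n | vnorm x = 1]].
Proof.
exists (Num.sqrt (\sum_(i < m) (\sum_(j < n) `|A i j|) ^+ 2)).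
move=> _ [x /= hx <-]; rewrite /vnorm ler_sqrt; last by apply: sumr_ge0 => i _; exact: sqr_ge0.
apply: ler_sum => i _.
rewrite -real_normK ?num_real // lerXn2r // ?nnegrE ?sumr_ge0 //.
rewrite mxE (le_trans (ler_norm_sum _ _ _)) // ler_sum // => j _.
by rewrite normrM ler_piMr // vnorm1_coord.
Qed.

Lemma specnorm_ge0 m n (A : 'M[R]_(m, n)) : (0 < n)%N -> 0 <= specnorm A.
Proof.
move=> hn; set u : 'cV[R]_n := delta_mx (Ordinal hn) 0.
have hu : vnorm u = 1.
  rewrite /vnorm (bigD1 (Ordinal hn)) //= big1 ?addr0; first by rewrite !mxE !eqxx expr1n sqrtr1.
  by move=> i /negbTE hi; rewrite mxE hi expr0n.
have h0 := vnorm_ge0 (A *m u); apply: le_trans h0 _; rewrite /specnorm.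
by apply: ub_le_sup (specnorm_bnd A) _ _; exists u.
Qed.

Lemma specnormP m n (A : 'M[R]_(m, n)) (x : 'cV[R]_n) :
  (0 < n)%N -> vnorm (A *m x) <= specnorm A * vnorm x.
Proof.
move=> hn; have [->|x0] := eqVneq x 0.
  have z : forall p (y : 'cV[R]_p), y = 0 -> vnorm y = 0.
    by move=> p y ->; rewrite /vnorm big1 ?sqrtr0 // => i _; rewrite mxE expr0n.
  by rewrite mulmx0 !z // mulr0.
have hv := vnorm_gt0 x0.
set u := (vnorm x)^-1 *: x.
have hu : vnorm u = 1 by rewrite vnormZ ger0_norm ?invr_ge0 ?ltW // mulVf // gt_eqF.
have ex : x = vnorm x *: u by rewrite /u scalerA mulfV ?gt_eqF // scale1r.
rewrite {1}ex -scalemxAr vnormZ (ger0_norm (ltW hv)) mulrC ler_pM2r //.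
by apply: ub_le_sup (specnorm_bnd A) _ _; exists u.
Qed.

End H.
Theorem theorem1 (R : realType) (n : nat) (hn : (0 < n)%N)
    (A B C D : 'M[R]_n)
    (alpha : 'I_n -> R) (s : 'I_n -> bool) :
  (* Assumption 1 *)
  block_mx A B C D \in unitmx ->
  posdef A ->
  (forall i, 0 < alpha i < 1) ->
  let k := fun i : 'I_n =>
    (-1) ^+ s i * (Num.sqrt (1 - alpha i ^+ 2) / alpha i) in
  let kmax := \big[Num.max/k (Ordinal hn)]_(i < n) k i in
  let kmin := \big[Num.min/k (Ordinal hn)]_(i < n) k i in
  let dk := kmax - kmin in
  let K := diag_mx (\row_i k i) in
  let M := kmax *: A - C in
  M \in unitmx ->
  (* Assumption 2 *)
  dk < (specnorm (invmx M))^-1 * (specnorm A)^-1 ->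
  let Jinv := invmx (block_mx A B C D) in
  let Svp := dlsubmx Jinv in
  let Svq := drsubmx Jinv in
  let St := dsubmx Jinv in
  (Svp + Svq *m K) \in unitmx /\
  (forall dv : 'cV[R]_n,
     exists! dp : 'cV[R]_n, dv = St *m col_mx dp (K *m dp)).
Proof.
move=> hJ _ _ k kmax kmin dk K M hM hdk Jinv Svp Svq St.
have hkmax i : k i <= kmax by exact: le_bigmax.
have hkmin i : kmin <= k i by exact: bigmin_le.
have dk0 : 0 <= dk by rewrite subr_ge0 (le_trans (hkmin (Ordinal hn))).
have hSt (y : 'cV[R]_n) : St *m col_mx y (K *m y) = (Svp + Svq *m K) *m y.
  by rewrite /St -[dsubmx Jinv]hsubmxK mul_row_col mulmxDl mulmxA.
set S := Svp + Svq *m K.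
have inj (y : 'cV[R]_n) : S *m y = 0 -> y = 0.
  move=> hy; case: (eqVneq y 0) => // y0; exfalso.
  set w := col_mx y (K *m y).
  set z := usubmx Jinv *m w.
  have hw : Jinv *m w = col_mx z 0.
    by rewrite -[Jinv in LHS]vsubmxK mul_col_mx -/St hSt hy.
  have hw2 : w = block_mx A B C D *m col_mx z 0.
    by rewrite -hw mulmxA mulmxV // mul1mx.
  rewrite mul_block_col !mulmx0 !addr0 in hw2.
  case/eq_col_mx: hw2 => hA hC.
  have z0 : z != 0 by apply: contra y0 => /eqP z0; rewrite hA z0 mulmx0.
  set v : 'cV[R]_n := \col_i ((kmax - k i) * (A *m z) i 0).
  have hMz : M *m z = v.
    rewrite /M mulmxBl -scalemxAl -hC hA; apply/matrixP => i j.
    by rewrite (ord1 j) /K mul_diag_mx !mxE mulrBl.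
  have hz : z = invmx M *m v by rewrite -hMz mulKmx.
  have bv : vnorm v <= dk * vnorm (A *m z).
    rewrite /vnorm -[dk in X in _ <= X](@ger0_norm _ dk) // -sqrtr_sqr -sqrtrM ?sqr_ge0 //.
    rewrite ler_sqrt; last by rewrite mulr_ge0 ?sqr_ge0 // sumr_ge0 // => i _; exact: sqr_ge0.
    rewrite mulr_sumr ler_sum // => i _; rewrite mxE exprMn.
    apply: ler_wpM2r; first exact: sqr_ge0.
    have h1 : 0 <= kmax - k i by rewrite subr_ge0.
    rewrite lerXn2r // ?nnegrE //.
    by rewrite /dk lerD2l lerN2.
  set sM := specnorm (invmx M) in hdk *; set sA := specnorm A in hdk *.
  have sM0 : 0 <= sM by exact: specnorm_ge0.
  have sA0 : 0 <= sA by exact: specnorm_ge0.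
  have c1 : vnorm z <= sM * (dk * (sA * vnorm z)).
    rewrite {1}hz; apply: (le_trans (specnormP _ _ hn)).
    apply: ler_wpM2l => //; apply: (le_trans bv); apply: ler_wpM2l => //.
    exact: specnormP.
  have t0 := vnorm_gt0 z0.
  have [sM00|sMp] := eqVneq sM 0.
    by move: hdk; rewrite sM00 invr0 mul0r; lra.
  have [sA00|sAp] := eqVneq sA 0.
    by move: hdk; rewrite sA00 invr0 mulr0; lra.
  have sMp' : 0 < sM by rewrite lt_def sMp.
  have sAp' : 0 < sA by rewrite lt_def sAp.
  move: hdk; rewrite -invfM -[(_)^-1]mul1r ltr_pdivlMr ?mulr_gt0 // => hdk.
  move: c1 hdk t0; set t := vnorm z; nra.
have unitS : S \in unitmx.
  case: (boolP (S \in unitmx)) => // hnu; exfalso.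
  move: hnu; rewrite unitmxE unitfE negbK -det_tr => /det0P [u u0 hu].
  have : S *m u^T = 0 by rewrite -[S *m _]trmxK trmx_mul trmxK hu trmx0.
  by move/inj/eqP; rewrite trmx_eq0 (negbTE u0).
split => // dv; exists (invmx S *m dv); split.
  by rewrite hSt mulmxA mulmxV // mul1mx.
by move=> y ->; rewrite hSt mulmxA mulVmx // mul1mx.
Qed.
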